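(* In the homogeneous, resource-abundant setting ($N_k=N>0$ for all $k\in[n]$, $F\ge nN$), let $\boldsymbol O^*$ have $O^*_{\mathcal N}=N/2$ and $O^*_i=0$ for $i<\mathcal N$. Let $\boldsymbol\varepsilon=(0,\dots,0,-\eta)\in\mathbb R^{\mathcal N}$ with $\eta>0$. Then $$T(\boldsymbol\varepsilon)\le-\boldsymbol O^{*t}M\boldsymbol\varepsilon,$$ where $T(\boldsymbol\varepsilon)=\boldsymbol l^t\boldsymbol\varepsilon+\frac12\boldsymbol\varepsilon^tM\boldsymbol\varepsilon$.
   Context: Fix an integer $n\ge2$ and write $[m]=\{1,\dots,m\}$. Let $\mathcal X$ be the collection of subsets of $[n]$ with at least two elements, $\mathcal N=2^n-n-1$, and let $I:\mathcal X\to[\mathcal N]$ be a bijection such that $A\subsetneq B$ implies $I(A)<I(B)$ (so $I([n])=\mathcal N$). Write $f(c)=|I^{-1}(c)|$, $S(c)=\{i\in[\mathcal N]:I^{-1}(c)\subseteq I^{-1}(i)\}$, $B(c)=\{i\in[\mathcal N]:I^{-1}(i)\subsetneq I^{-1}(c)\}$. With effective knowledges $N_k'=\min\{N_k,F\}$ (here all equal to $N$), the objective is $$T(\boldsymbol O)=\sum_{c=1}^{\mathcal N}\frac{\sum_{a\in S(c)}O_a}{\prod_{k\in I^{-1}(c)}N_k'}\Big(\sum_{k\in I^{-1}(c)}N_k'-f(c)\sum_{a\in S(c)}O_a-(f(c)-1)\sum_{a\in B(c)}O_a\Big),$$ and $\boldsymbol l$, $M$ (symmetric) are the unique vector and matrix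 with $T(\boldsymbol O)=\boldsymbol l^t\boldsymbol O+\frac12\boldsymbol O^tM\boldsymbol O$ on $\mathbb R^{\mathcal N}$. *)

(* Defs.v *)
From HB Require Import structures.
From mathcomp Require Import all_boot all_order all_algebra.
Set Implicit Arguments.
Unset Strict Implicit.
Unset Printing Implicit Defensive.
Import Order.TTheory GRing.Theory Num.Theory.
Local Open Scope ring_scope.

(* Number of subsets of [n] with at least two elements: 2^n - n - 1. *)
Definition Ncal (n : nat) : nat := (2 ^ n - n - 1)%N.

(* Indices of [Ncal n] are represented 0-based by 'I_(Ncal n):
   the paper's index c corresponds to the ordinal c-1.
   J : 'I_(Ncal n) -> {set 'I_n} is the inverse bijection I^{-1}. *)

Definition Sset (n : nat) (J : 'I_(Ncal n) -> {set 'I_n}) (c : 'I_(Ncal n))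
  : {set 'I_(Ncal n)} := [set i | J c \subset J i].

Definition Bset (n : nat) (J : 'I_(Ncal n) -> {set 'I_n}) (c : 'I_(Ncal n))
  : {set 'I_(Ncal n)} := [set i | J i \proper J c].

Definition fsz (n : nat) (J : 'I_(Ncal n) -> {set 'I_n}) (c : 'I_(Ncal n)) : nat :=
  #|J c|.

Definition Tobj (R : realFieldType) (n : nat) (J : 'I_(Ncal n) -> {set 'I_n})
  (Neff : 'I_n -> R) (O : 'I_(Ncal n) -> R) : R :=
  \sum_(c < Ncal n)
    ((\sum_(a in Sset J c) O a) / (\prod_(k in J c) Neff k)) *
    ((\sum_(k in J c) Neff k)
     - (fsz J c)%:R * (\sum_(a in Sset J c) O a)
     - ((fsz J c)%:R - 1) * (\sum_(a in Bset J c) O a)).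

Definition bform (R : realFieldType) (m : nat) (x : 'I_m -> R) (M : 'M[R]_m)
  (y : 'I_m -> R) : R :=
  \sum_(i < m) \sum_(j < m) x i * M i j * y j.

Definition dotv (R : realFieldType) (m : nat) (l x : 'I_m -> R) : R :=
  \sum_(i < m) l i * x i.

(* Main.v *)
Require Import Defs.
From HB Require Import structures.
From mathcomp Require Import all_boot all_order all_algebra.
From mathcomp Require Import ring lra zify.
Import Order.TTheory GRing.Theory Num.Theory.
Local Open Scope ring_scope.

Lemma Ncal_pos n : (2 <= n)%N -> (0 < Ncal n)%N.
Proof.
rewrite /Ncal => hn.
suff: (n.+1 < 2 ^ n)%N by move=> h; rewrite !subn_gt0 ?subn_gt0; lia.
elim: n hn => [|k IH] //; case: k IH => [|k] IH // _.
case: k IH => [|k] IH //.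
have := IH isT; rewrite [(2 ^ k.+3)%N]expnS; move: (2 ^ k.+2)%N => x; lia.
Qed.

Theorem mainTheorem4
  (R : realFieldType) (n : nat) (hn : (2 <= n)%N)
  (J : 'I_(Ncal n) -> {set 'I_n})
  (J_inj : injective J)
  (J_card : forall c, (2 <= #|J c|)%N)
  (J_surj : forall A : {set 'I_n}, (2 <= #|A|)%N -> exists c, J c = A)
  (J_mono : forall a b, J a \proper J b -> (a < b)%N)
  (Nk : 'I_n -> R) (N F : R)
  (hNk : forall k, Nk k = N) (hN : 0 < N) (hF : n%:R * N <= F)
  (l : 'I_(Ncal n) -> R) (M : 'M[R]_(Ncal n))
  (hMsym : M^T = M)
  (hlM : forall O : 'I_(Ncal n) -> R,
      Tobj J (fun k => Num.min (Nk k) F) O = dotv l O + 2^-1 * bform O M O)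
  (eta : R) (heta : 0 < eta) :
  let Ostar : 'I_(Ncal n) -> R :=
    fun i => if (i : nat) == (Ncal n).-1 then N / 2 else 0 in
  let eps : 'I_(Ncal n) -> R :=
    fun i => if (i : nat) == (Ncal n).-1 then - eta else 0 in
  dotv l eps + 2^-1 * bform eps M eps <= - bform Ostar M eps.
Proof.
have hp := @Ncal_pos _ hn.
have hlt : ((Ncal n).-1 < Ncal n)%N by rewrite prednK.
pose lst : 'I_(Ncal n) := Ordinal hlt.
pose e (t : R) : 'I_(Ncal n) -> R := fun i => if i == lst then t else 0.
have eE t i : e t i = if (i : nat) == (Ncal n).-1 then t else 0 by [].
have dotE t : dotv l (e t) = l lst * t.
  rewrite /dotv (bigD1 lst) //= big1 ?addr0; first by rewrite /e eqxx.
  by move=> i /negbTE hi; rewrite /e hi mulr0.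
have bformE s t : bform (e s) M (e t) = s * M lst lst * t.
  rewrite /bform (bigD1 lst) //= [X in _ + X]big1 ?addr0.
    rewrite (bigD1 lst) //= big1 ?addr0; first by rewrite /e eqxx.
    by move=> i /negbTE hi; rewrite /e hi mulr0.
  move=> i /negbTE hi; apply: big1 => j _; by rewrite /e hi !mul0r.
have Jlst : J lst = setT.
  have [c hc] : exists c, J c = setT.
    by apply: J_surj; rewrite cardsT card_ord.
  case: (eqVneq c lst) => [<-|hne] //.
  have hprop : J lst \proper J c.
    rewrite hc properEneq subsetT andbT -hc.
    by apply/negP => /eqP /J_inj h; rewrite h eqxx in hne.
  have := J_mono _ _ hprop; have := ltn_ord c => h1 h2.
  rewrite /= in h2; lia.
have hmin : forall k, Num.min (Nk k) F = N.
  move=> k; rewrite hNk; apply/min_idPl.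
  apply: le_trans hF; rewrite -{1}(mul1r N) ler_pM2r // ler1n.
  exact: ltnW.
pose K := \sum_(c < Ncal n) ((fsz J c)%:R / N ^+ fsz J c).
have K0 : 0 <= K.
  by apply: sumr_ge0 => c _; apply: divr_ge0 => //; apply: exprn_ge0; apply: ltW.
have TE t : Tobj J (fun k => Num.min (Nk k) F) (e t) = t * (N - t) * K.
  rewrite /Tobj /K mulr_sumr; apply: eq_bigr => c _.
  have hS : \sum_(a in Sset J c) e t a = t.
    rewrite (bigD1 lst) /=; last by rewrite inE Jlst subsetT.
    rewrite big1 ?addr0; first by rewrite /e eqxx.
    by move=> i /andP[_ /negbTE hi]; rewrite /e hi.
  have hB : \sum_(a in Bset J c) e t a = 0.
    apply: big1 => i; rewrite inE /e; case: eqP => // ->.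
    by rewrite Jlst properE subsetT andbF.
  rewrite hS hB.
  have hsum : \sum_(k in J c) Num.min (Nk k) F = N *+ #|J c|.
    by rewrite (eq_bigr (fun _ => N)) ?sumr_const // => k _; rewrite hmin.
  have hprod : \prod_(k in J c) Num.min (Nk k) F = N ^+ #|J c|.
    by rewrite (eq_bigr (fun _ => N)) ?prodr_const // => k _; rewrite hmin.
  rewrite hsum hprod.
  have hN' : N ^+ #|J c| != 0 by rewrite expf_neq0 // gt_eqF.
  rewrite /fsz -mulr_natl. field.
  done.
change (dotv l (e (- eta)) + 2^-1 * bform (e (- eta)) M (e (- eta)) <=
        - bform (e (N / 2)) M (e (- eta))).
have h1 := hlM (e 1); have h2 := hlM (e (-1)).
rewrite !TE !dotE !bformE in h1 h2.
rewrite dotE !bformE.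
have hm : M lst lst = - 2 * K by lra.
have ha : l lst = N * K by lra.
rewrite hm ha.
have : 0 <= eta * eta * K by rewrite mulr_ge0 // mulr_ge0 // ltW.
lra.
Qed.
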